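(* Let $\varphi_0\in\mathbb{R}$ and let $v$ be a smooth function with $v(\varphi)>0$ and $v'(\varphi)>0$ for all $\varphi\ge\varphi_0$. Let $h_1,h_2$ be two solutions of $h'=\sqrt{h^2-v}$ in the region $\{(\varphi,h):\varphi\ge\varphi_0,\ h>\sqrt{v(\varphi)}\}$ with $h_2(\varphi_0)>h_1(\varphi_0)$, and set $\mathfrak{h}_i(\varphi)=h_i(\varphi)/\sqrt{v(\varphi)}$, $i=1,2$. Then, for all $\varphi$ at which both are defined, $$\mathfrak{h}_2(\varphi)>\mathfrak{h}_1(\varphi)\quad(\varphi\ge\varphi_0),$$ and $$\frac{\mathfrak{h}_2(\varphi)}{\mathfrak{h}_1(\varphi)}>\frac{\mathfrak{h}_2(\varphi')}{\mathfrak{h}_1(\varphi')}\quad\text{for all }\varphi>\varphi'>\varphi_0.$$ *)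

(* Defs.v *)
From Stdlib Require Import Reals Lra.
From Coquelicot Require Import Coquelicot.
Open Scope R_scope.

Definition smooth (v : R -> R) : Prop := forall (n : nat) (x : R), ex_derive_n v n x.

Definition ode_solution (v : R -> R) (phi0 : R) (b : Rbar) (h : R -> R) : Prop :=
  Rbar_lt (Finite phi0) b /\
  (forall phi, phi0 <= phi -> Rbar_lt (Finite phi) b -> h phi > sqrt (v phi)) /\
  filterlim h (at_right phi0) (locally (h phi0)) /\
  (forall phi, phi0 < phi -> Rbar_lt (Finite phi) b ->
     is_derive h phi (sqrt (h phi ^ 2 - v phi))).

Definition normalized (v h : R -> R) (phi : R) : R := h phi / sqrt (v phi).

(* Main.v *)
Require Import Defs.
From Stdlib Require Import Reals Lra.
From Coquelicot Require Import Coquelicot.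
Open Scope R_scope.

Lemma rmin_lt x a b : Rbar_lt (Finite x) (Rbar_min a b) -> Rbar_lt x a /\ Rbar_lt x b.
Proof.
  intro H; split.
  - eapply Rbar_lt_le_trans; [exact H| apply Rbar_min_l].
  - eapply Rbar_lt_le_trans; [exact H| apply Rbar_min_r].
Qed.

Lemma ball_R (x e y : R) : ball x e y <-> Rabs (y - x) < e.
Proof. reflexivity. Qed.

Lemma right_cont f a : filterlim f (at_right a) (locally (f a)) ->
  forall eps, eps > 0 -> exists d, d > 0 /\ forall y, a < y < a + d -> Rabs (f y - f a) < eps.
Proof.
  intros H eps He.
  destruct (proj1 (filterlim_locally f (f a)) H (mkposreal eps He)) as [d Hd].
  exists d; split; [apply cond_pos|].
  intros y [H1 H2]. apply (Hd y). apply ball_R. rewrite Rabs_right; lra. lra.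
Qed.

Lemma cont_pos f s l : is_derive f s l -> f s > 0 ->
  exists d, d > 0 /\ forall y, Rabs (y - s) < d -> f y > 0.
Proof.
  intros Hd Hs.
  assert (C : filterlim f (locally s) (locally (f s))).
  { apply ex_derive_continuous. exists l. exact Hd. }
  destruct (proj1 (filterlim_locally f (f s)) C (mkposreal (f s) Hs)) as [d Hd'].
  exists d; split; [apply cond_pos|].
  intros y Hy. specialize (Hd' y Hy). apply ball_R in Hd'. simpl in Hd'.
  apply Rabs_def2 in Hd'. destruct Hd'. unfold minus, plus, opp in *; simpl in *. lra.
Qed.

Lemma propag (d d' : R -> R) (a : R) (B : Rbar) :
  d a > 0 ->
  (exists e, e > 0 /\ forall y, a < y < a + e -> d y > 0) ->
  (forall x, a < x -> Rbar_lt x B -> is_derive d x (d' x)) ->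
  (forall x, a < x -> Rbar_lt x B -> d x > 0 -> d' x > 0) ->
  forall p, a <= p -> Rbar_lt p B -> d p > 0.
Proof.
  intros Ha [e [He Hr]] Hd Hd' p Hp HB.
  destruct (Req_dec p a) as [->|Hpa]; [exact Ha|].
  assert (Hp' : a < p) by lra.
  set (E := fun x => a <= x <= p /\ forall y, a <= y <= x -> d y > 0).
  assert (Eb : bound E) by (exists p; intros x [Hx _]; lra).
  assert (Ea : E a) by (split; [lra| intros y Hy; replace y with a by lra; exact Ha]).
  destruct (completeness E Eb (ex_intro _ a Ea)) as [s [Hub Hlub]].
  set (m := Rmin p (a + e/2)).
  assert (Em : E m).
  { unfold m; split. split; [apply Rmin_glb; lra| apply Rmin_l].
    intros y Hy. destruct (Req_dec y a) as [->|]; [exact Ha|].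
    apply Hr. pose proof (Rmin_r p (a+e/2)). lra. }
  assert (Hsm : m <= s) by (apply Hub; exact Em).
  assert (Hma : a < m) by (unfold m; apply Rmin_glb_lt; lra).
  assert (Hsp : s <= p) by (apply Hlub; intros x [Hx _]; lra).
  assert (Hsb : Rbar_lt s B).
  { eapply Rbar_le_lt_trans; [|exact HB]. simpl. exact Hsp. }
  assert (Hbelow : forall y, a <= y < s -> d y > 0).
  { intros y Hy. destruct (Rlt_dec 0 (d y)) as [|Hn]; [lra|].
    exfalso. assert (s <= y); [|lra].
    apply Hlub. intros x [Hx Hx']. destruct (Rle_dec x y) as [|Hxy]; [lra|].
    exfalso. apply Hn. apply Hx'. lra. }
  assert (Hds : d s > 0).
  { set (b := (a + s)/2).
    destruct (MVT_cor2 d d' b s) as [c [Hc1 Hc2]].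
    - unfold b; lra.
    - intros c Hc. apply is_derive_Reals. apply Hd. unfold b in Hc; lra.
      eapply Rbar_le_lt_trans; [|exact Hsb]. simpl. lra.
    - assert (d b > 0) by (apply Hbelow; unfold b; lra).
      assert (d' c > 0).
      { apply Hd'. unfold b in Hc2; lra.
        eapply Rbar_le_lt_trans; [|exact Hsb]. simpl. lra.
        apply Hbelow. unfold b in Hc2; lra. }
      assert (d' c * (s - b) > 0) by (apply Rmult_lt_0_compat; unfold b in *; lra).
      lra. }
  destruct (Req_dec s p) as [<-|Hne]; [exact Hds|].
  destruct (cont_pos d s (d' s) (Hd s ltac:(lra) Hsb) Hds) as [g [Hg Hg']].
  exfalso.
  set (q := Rmin p (s + g/2)).
  assert (Eq : E q).
  { unfold q; split. split; [apply Rmin_glb; lra| apply Rmin_l].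
    intros y Hy. destruct (Rlt_dec y s). apply Hbelow; lra.
    apply Hg'. pose proof (Rmin_r p (s+g/2)). apply Rabs_def1; lra. }
  assert (q <= s) by (apply Hub; exact Eq).
  unfold q in H. pose proof (Rmin_r p (s+g/2)). destruct (Rle_dec p (s + g/2)) as [Hl|Hl]; [rewrite Rmin_left in H; lra| rewrite Rmin_right in H; lra].
Qed.

Lemma sq_gt v h : 0 <= v -> sqrt v < h -> v < h ^ 2.
Proof.
  intros Hv Hh. pose proof (sqrt_sqrt v Hv). pose proof (sqrt_pos v). nra.
Qed.
Theorem proposition4 (phi0 : R) (v : R -> R) (h1 h2 : R -> R) (b1 b2 : Rbar)
  (Hsmooth : smooth v)
  (Hvpos : forall phi, phi0 <= phi -> v phi > 0)
  (Hdvpos : forall phi, phi0 <= phi -> Derive v phi > 0)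
  (Hh1 : ode_solution v phi0 b1 h1)
  (Hh2 : ode_solution v phi0 b2 h2)
  (H0 : h2 phi0 > h1 phi0) :
  (forall phi, phi0 <= phi -> Rbar_lt (Finite phi) (Rbar_min b1 b2) ->
     normalized v h2 phi > normalized v h1 phi) /\
  (forall phi phi', phi0 < phi' -> phi' < phi -> Rbar_lt (Finite phi) (Rbar_min b1 b2) ->
     normalized v h2 phi / normalized v h1 phi >
     normalized v h2 phi' / normalized v h1 phi').
Proof.
  destruct Hh1 as [_ [A1 [C1 D1]]]. destruct Hh2 as [_ [A2 [C2 D2]]].
  set (B := Rbar_min b1 b2).
  assert (Hpos1 : forall x, phi0 <= x -> Rbar_lt x B -> h1 x > 0 /\ v x < h1 x ^ 2).
  { intros x Hx HB. destruct (rmin_lt _ _ _ HB) as [Hb1 Hb2]. pose proof (A1 x Hx Hb1).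
    pose proof (sqrt_pos (v x)). pose proof (Hvpos x Hx). split. lra. apply sq_gt; lra. }
  assert (Hpos2 : forall x, phi0 <= x -> Rbar_lt x B -> h2 x > 0 /\ v x < h2 x ^ 2).
  { intros x Hx HB. destruct (rmin_lt _ _ _ HB) as [Hb1 Hb2]. pose proof (A2 x Hx Hb2).
    pose proof (sqrt_pos (v x)). pose proof (Hvpos x Hx). split. lra. apply sq_gt; lra. }
  assert (P1 : forall x, phi0 <= x -> Rbar_lt x B -> h2 x - h1 x > 0).
  { apply (propag (fun x => h2 x - h1 x)
      (fun x => sqrt (h2 x ^ 2 - v x) - sqrt (h1 x ^ 2 - v x)) phi0 B).
    - lra.
    - destruct (right_cont h1 phi0 C1 ((h2 phi0 - h1 phi0)/2)) as [e1 [He1 R1]]. lra.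
      destruct (right_cont h2 phi0 C2 ((h2 phi0 - h1 phi0)/2)) as [e2 [He2 R2]]. lra.
      exists (Rmin e1 e2). split. apply Rmin_glb_lt; lra.
      intros y Hy. pose proof (Rmin_l e1 e2). pose proof (Rmin_r e1 e2).
      specialize (R1 y ltac:(lra)). specialize (R2 y ltac:(lra)).
      apply Rabs_def2 in R1. apply Rabs_def2 in R2. lra.
    - intros x Hx HB. destruct (rmin_lt _ _ _ HB) as [Hb1 Hb2].
      exact (is_derive_minus h2 h1 x _ _ (D2 x Hx Hb2) (D1 x Hx Hb1)).
    - intros x Hx HB Hd. destruct (Hpos1 x ltac:(lra) HB). destruct (Hpos2 x ltac:(lra) HB).
      assert (sqrt (h1 x ^ 2 - v x) < sqrt (h2 x ^ 2 - v x)); [|lra].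
      apply sqrt_lt_1_alt. split. lra. nra. }
  assert (Hn : forall h x, phi0 <= x -> normalized v h x = h x / sqrt (v x)) by reflexivity.
  split.
  - intros x Hx HB. unfold normalized. pose proof (sqrt_lt_R0 _ (Hvpos x Hx)).
    apply Rmult_lt_compat_r. apply Rinv_0_lt_compat; lra. specialize (P1 x Hx HB). lra.
  - intros x x' Hx' Hxx HB.
    assert (Hr : forall y, phi0 <= y -> Rbar_lt y B ->
      normalized v h2 y / normalized v h1 y = h2 y / h1 y).
    { intros y Hy HBy. unfold normalized. pose proof (sqrt_lt_R0 _ (Hvpos y Hy)).
      destruct (Hpos1 y Hy HBy). field. lra. }
    assert (HB' : Rbar_lt x' B).
    { eapply Rbar_le_lt_trans; [|exact HB]. simpl. lra. }
    rewrite (Hr x ltac:(lra) HB), (Hr x' ltac:(lra) HB').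
    set (r' := fun y => (sqrt (h2 y ^ 2 - v y) * h1 y - h2 y * sqrt (h1 y ^ 2 - v y)) / h1 y ^ 2).
    destruct (MVT_cor2 (fun y => h2 y / h1 y) r' x' x) as [c [Hc1 Hc2]]. lra.
    + intros c Hc. apply is_derive_Reals.
      assert (HBc : Rbar_lt c B). { eapply Rbar_le_lt_trans; [|exact HB]. simpl. lra. }
      destruct (rmin_lt _ _ _ HBc). destruct (Hpos1 c ltac:(lra) HBc).
      apply is_derive_div; [apply D2|apply D1|]; auto; lra.
    + assert (HBc : Rbar_lt c B). { eapply Rbar_le_lt_trans; [|exact HB]. simpl. lra. }
      destruct (Hpos1 c ltac:(lra) HBc). destruct (Hpos2 c ltac:(lra) HBc).
      pose proof (P1 c ltac:(lra) HBc). pose proof (Hvpos c ltac:(lra)).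
      assert (r' c > 0).
      { unfold r'. apply Rdiv_lt_0_compat; [|nra].
        assert (h2 c * sqrt (h1 c ^ 2 - v c) < sqrt (h2 c ^ 2 - v c) * h1 c); [|lra].
        rewrite <- (sqrt_pow2 (h2 c)) at 1 by lra. rewrite <- (sqrt_pow2 (h1 c)) at 2 by lra.
        rewrite <- !sqrt_mult_alt by nra.
        assert (h1 c ^ 2 < h2 c ^ 2) by nra. apply sqrt_lt_1_alt. split. nra. nra. }
      assert (r' c * (x - x') > 0) by (apply Rmult_lt_0_compat; lra).
      simpl in Hc1. lra.
Qed.
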